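(* Let $G=(V,E)$ be a finite connected graph (with edge weights $w_{xy}>0$ and vertex measure $\mu:V\to(0,\infty)$) which satisfies condition CD$(F;0)$ for some CD-function $F$, and let $\varphi$ be the relaxation function associated with $F$. Suppose $u:[0,\infty)\times V\to(0,\infty)$ is a solution of the heat equation on $G$. Then $$-\Delta(\log u)(t,x)\le\varphi(t)\quad\text{for all }(t,x)\in(0,\infty)\times V,$$ and consequently $$\Psi_\Upsilon(\log u)(t,x)-\partial_t(\log u)(t,x)\le\varphi(t)\quad\text{for all }(t,x)\in(0,\infty)\times V.$$
   Context: Graphs are undirected and locally finite; $x\sim y$ means $xy\in E$; each edge has a weight $w_{xy}=w_{yx}>0$; $\mu:V\to(0,\infty)$. The Laplacian is $\Delta u(x)=\frac1{\mu(x)}\sum_{y\sim x}w_{xy}(u(y)-u(x))$ and $L:=-\Delta$. For $H:\mathbb R\to\mathbb R$ and $v:V\to\mathbb R$, $\Psi_H(v)(x)=\frac1{\mu(x)}\sum_{y\sim x}w_{xy}H(v(y)-v(x))$. Let $\Upsilon(z)=e^z-1-z$, so $\Upsilon'(z)=e^z-1$. A CD-function is a continuous $F:[0,\infty)\to[0,\infty)$ with $F(0)=0$, $x\mapsto F(x)/x$ strictly increasing on $(0,\infty)$, and $\int_1^\infty dr/F(r)<\infty$. Its relaxation function is the unique positive solution $\varphi:(0,\infty)\to(0,\infty)$ of $\dot\varphi(t)+F(\varphi(t))=0$ for $t>0$ with $\varphi(t)\to\infty$ as $t\to0+$. $G$ satisfies CD$(F;0)$ if for every $x\in V$ and every $v:V\to\mathbb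 R$ with $Lv(x)>0$ and $Lv(x)\ge Lv(y)$ for all $y\sim x$, one has $\Delta\Psi_{\Upsilon'}(v)(x)\ge F(Lv(x))$. A solution of the heat equation is a function $u(t,x)$, continuously differentiable in $t$, with $\partial_tu=\Delta u$ on $[0,\infty)\times V$ (time derivative one-sided at $t=0$). *)

(* Defs.v *)
From Stdlib Require Import Reals Lra List Relations.
Open Scope R_scope.

Definition vsum {V : Type} (vs : list V) (f : V -> R) : R :=
  fold_right (fun y acc => f y + acc) 0 vs.

(* A finite weighted graph: vertex type V enumerated (without repetition)
   by vs; weights w : V -> V -> R, symmetric and nonnegative, the edge set
   being { xy | w x y > 0 }; vertex measure mu > 0. *)
Definition finite_weighted_graph {V : Type} (vs : list V)
    (w : V -> V -> R) (mu : V -> R) : Prop :=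
  NoDup vs /\ (forall x : V, In x vs) /\
  (forall x y, w x y = w y x) /\ (forall x y, 0 <= w x y) /\
  (forall x, 0 < mu x).

Definition adj {V : Type} (w : V -> V -> R) (x y : V) : Prop := 0 < w x y.

Definition connected {V : Type} (w : V -> V -> R) : Prop :=
  forall x y : V, clos_refl_trans V (adj w) x y.

Definition lap {V : Type} (vs : list V) (w : V -> V -> R) (mu : V -> R)
    (u : V -> R) (x : V) : R :=
  / mu x * vsum vs (fun y => w x y * (u y - u x)).

Definition Lop {V : Type} (vs : list V) (w : V -> V -> R) (mu : V -> R)
    (u : V -> R) (x : V) : R := - lap vs w mu u x.

Definition PsiH {V : Type} (vs : list V) (w : V -> V -> R) (mu : V -> R)
    (H : R -> R) (v : V -> R) (x : V) : R :=
  / mu x * vsum vs (fun y => w x y * H (v y - v x)).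

Definition Upsilon (z : R) : R := exp z - 1 - z.
Definition Upsilon' (z : R) : R := exp z - 1.

Definition CD_function (F : R -> R) : Prop :=
  (forall r, 0 <= r -> forall eps, 0 < eps -> exists delta, 0 < delta /\
      forall s, 0 <= s -> Rabs (s - r) < delta -> Rabs (F s - F r) < eps) /\
  (forall r, 0 <= r -> 0 <= F r) /\
  F 0 = 0 /\
  (forall x y, 0 < x -> x < y -> F x / x < F y / y) /\
  (* the improper integral  int_1^oo dr / F(r)  converges *)
  (exists l : R, forall eps, 0 < eps -> exists B, 1 <= B /\
      forall b (pr : Riemann_integrable (fun r => / F r) 1 b),
        B <= b -> Rabs (RiemannInt pr - l) < eps).

Definition relaxation_function (F phi : R -> R) : Prop :=
  (forall t, 0 < t -> 0 < phi t) /\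
  (forall t, 0 < t -> derivable_pt_lim phi t (- F (phi t))) /\
  (forall M, exists delta, 0 < delta /\
      forall t, 0 < t < delta -> M < phi t).

Definition CD {V : Type} (vs : list V) (w : V -> V -> R) (mu : V -> R)
    (F : R -> R) : Prop :=
  forall (x : V) (v : V -> R),
    0 < Lop vs w mu v x ->
    (forall y, adj w x y -> Lop vs w mu v y <= Lop vs w mu v x) ->
    F (Lop vs w mu v x) <= lap vs w mu (PsiH vs w mu Upsilon' v) x.

(* u solves the heat equation on [0,oo) x V: differentiable in t with
   d/dt u = Delta u for t > 0, one-sided (right) derivative at t = 0.
   (Continuity of the t-derivative is automatic: it equals Delta u(t),
   a finite combination of the continuous functions t |-> u(t,y).) *)
Definition heat_solution {V : Type} (vs : list V) (w : V -> V -> R)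
    (mu : V -> R) (u : R -> V -> R) : Prop :=
  (forall x t, 0 < t ->
     derivable_pt_lim (fun s => u s x) t (lap vs w mu (u t) x)) /\
  (forall x eps, 0 < eps -> exists delta, 0 < delta /\
     forall h, 0 < h < delta ->
       Rabs ((u h x - u 0 x) / h - lap vs w mu (u 0) x) < eps).

(* Main.v *)
Require Import Defs.
From Stdlib Require Import Reals List Relations Lra FunctionalExtensionality.
Open Scope R_scope.

Lemma vsum_ext {V : Type} (l : list V) f g :
  (forall y, f y = g y) -> vsum l f = vsum l g.
Proof. intros H; induction l; simpl; auto. rewrite H, IHl; auto. Qed.

Lemma vsum_le {V : Type} (l : list V) f g :
  (forall y, f y <= g y) -> vsum l f <= vsum l g.
Proof. intros H; induction l; simpl; [lra|]. specialize (H a); lra. Qed.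

Lemma vsum_plus {V : Type} (l : list V) f g :
  vsum l (fun y => f y + g y) = vsum l f + vsum l g.
Proof. induction l; simpl; [lra|]. rewrite IHl; lra. Qed.

Lemma vsum_scal {V : Type} (l : list V) c f :
  vsum l (fun y => c * f y) = c * vsum l f.
Proof. induction l; simpl; [lra|]. rewrite IHl; lra. Qed.

Lemma vsum_nonneg {V : Type} (l : list V) f :
  (forall z, 0 <= f z) -> 0 <= vsum l f.
Proof. intros H; induction l as [|b l IH]; simpl; [lra|]. specialize (H b); lra. Qed.

Lemma vsum_ge_term {V : Type} (l : list V) f x :
  In x l -> (forall z, 0 <= f z) -> f x <= vsum l f.
Proof.
  intros Hin Hp; induction l as [|a l IH]; simpl in *; [contradiction|].
  destruct Hin as [<-|Hin].
  - assert (0 <= vsum l f) by (apply vsum_nonneg; auto). lra.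
  - specialize (IH Hin). specialize (Hp a). lra.
Qed.

Lemma vsum_derive {V : Type} (l : list V) (f : R -> V -> R) (f' : V -> R) t :
  (forall y, derivable_pt_lim (fun s => f s y) t (f' y)) ->
  derivable_pt_lim (fun s => vsum l (f s)) t (vsum l f').
Proof.
  intros H; induction l as [|a l IH]; simpl.
  - apply derivable_pt_lim_const.
  - apply (derivable_pt_lim_plus (fun s => f s a) (fun s => vsum l (f s))); auto.
Qed.

Lemma deriv_left_max (h : R -> R) t l a :
  a < t -> derivable_pt_lim h t l ->
  (forall s, a < s < t -> h s <= h t) -> 0 <= l.
Proof.
  intros Hat Hd Hm. destruct (Rle_or_lt 0 l) as [|Hl]; auto. exfalso.
  destruct (Hd (- l / 2)) as [[d Hdp] Hd']; [lra|].
  set (k := - Rmin (d/2) ((t - a)/2)).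
  assert (Hk2 : - k <= d/2) by (unfold k; rewrite Ropp_involutive; apply Rmin_l).
  assert (Hk3 : - k <= (t-a)/2) by (unfold k; rewrite Ropp_involutive; apply Rmin_r).
  assert (Hk1 : k < 0) by (unfold k; unfold Rmin; destruct Rle_dec; lra).
  specialize (Hd' k ltac:(lra) ltac:(rewrite Rabs_left; simpl; lra)).
  specialize (Hm (t + k) ltac:(lra)).
  assert (Hq : 0 <= (h (t + k) - h t) / k).
  { replace ((h (t + k) - h t) / k) with ((h t - h (t + k)) / (- k)) by (field; lra).
    unfold Rdiv; apply Rmult_le_pos; [lra|]; left; apply Rinv_0_lt_compat; lra. }
  apply Rabs_def2 in Hd'. lra.
Qed.

Lemma list_max_ab {V : Type} (x0 : V) (l : list V) (G : V -> R -> R) a b :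
  a <= b -> (forall x c, a <= c <= b -> continuity_pt (G x) c) ->
  exists xs ts, In xs (x0 :: l) /\ a <= ts <= b /\
    forall x c, In x (x0 :: l) -> a <= c <= b -> G x c <= G xs ts.
Proof.
  intros Hab Hc. induction l as [|y l IH].
  - destruct (continuity_ab_maj (G x0) a b Hab (Hc x0)) as [M [HM1 HM2]].
    exists x0, M. split; [simpl; auto|]. split; auto.
    intros x c [<-|[]] Hc'; auto.
  - destruct IH as [xs [ts [H1 [H2 H3]]]].
    destruct (continuity_ab_maj (G y) a b Hab (Hc y)) as [M [HM1 HM2]].
    destruct (Rle_or_lt (G y M) (G xs ts)).
    + exists xs, ts. split; [simpl in *; tauto|]. split; auto.
      intros x c Hx Hc'. simpl in Hx. destruct Hx as [<-|[<-|Hx]].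
      * apply H3; simpl; auto.
      * specialize (HM1 c Hc'); lra.
      * apply H3; simpl; auto.
    + exists y, M. split; [simpl; auto|]. split; auto.
      intros x c Hx Hc'. simpl in Hx. destruct Hx as [Hx|[Hx|Hx]].
      * specialize (H3 x c ltac:(simpl; auto) Hc'). lra.
      * subst; auto.
      * specialize (H3 x c ltac:(simpl; auto) Hc'). lra.
Qed.

Lemma uniform_eta {V : Type} (l : list V) (P : V -> R -> Prop) :
  (forall z, exists eta, 0 < eta /\ forall h, 0 < h < eta -> P z h) ->
  exists eta, 0 < eta /\ forall z h, In z l -> 0 < h < eta -> P z h.
Proof.
  intros H. induction l as [|y l IH].
  - exists 1. split; [lra|]. intros z h [].
  - destruct IH as [e1 [He1 H1]]. destruct (H y) as [e2 [He2 H2]].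
    exists (Rmin e1 e2). split; [unfold Rmin; destruct Rle_dec; lra|].
    intros z h Hz Hh. pose proof (Rmin_l e1 e2). pose proof (Rmin_r e1 e2).
    destruct Hz as [<-|Hz].
    + apply H2; lra.
    + apply H1; auto; lra.
Qed.

Lemma psi_eq {V : Type} (vs : list V) w mu (f : V -> R) y :
  (forall z, 0 < f z) ->
  lap vs w mu f y * / f y = PsiH vs w mu Upsilon' (fun z => ln (f z)) y.
Proof.
  intros Hf. unfold lap, PsiH. rewrite Rmult_assoc. f_equal.
  rewrite Rmult_comm, <- vsum_scal. apply vsum_ext. intros z.
  unfold Upsilon'. replace (ln (f z) - ln (f y)) with (ln (f z) + - ln (f y)) by ring. rewrite exp_plus, exp_Ropp, !exp_ln by auto.
  specialize (Hf y). field. lra.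
Qed.

Lemma ln_u_deriv (u : R -> R) t d :
  0 < u t -> derivable_pt_lim u t d ->
  derivable_pt_lim (fun s => ln (u s)) t (d * / u t).
Proof.
  intros Hp Hd. rewrite Rmult_comm.
  apply (derivable_pt_lim_comp u ln t d (/ u t) Hd (derivable_pt_lim_ln _ Hp)).
Qed.

Lemma Lv_deriv {V : Type} (vs : list V) w mu (u : R -> V -> R) t x :
  0 < t -> (forall y, 0 < u t y) ->
  (forall y, derivable_pt_lim (fun s => u s y) t (lap vs w mu (u t) y)) ->
  derivable_pt_lim (fun s => - lap vs w mu (fun y => ln (u s y)) x) t
    (- lap vs w mu (PsiH vs w mu Upsilon' (fun y => ln (u t y))) x).
Proof.
  intros Ht Hp Hd.
  assert (Hl : forall y, derivable_pt_lim (fun s => ln (u s y)) t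
                  (PsiH vs w mu Upsilon' (fun y => ln (u t y)) y)).
  { intros y. rewrite <- psi_eq by auto. apply ln_u_deriv; auto. }
  apply (derivable_pt_lim_opp (fun s => lap vs w mu (fun y => ln (u s y)) x)).
  unfold lap.
  apply (derivable_pt_lim_scal (fun s => vsum vs (fun y => w x y * (ln (u s y) - ln (u s x))))).
  apply (vsum_derive vs (fun s y => w x y * (ln (u s y) - ln (u s x)))).
  intros y.
  apply (derivable_pt_lim_scal (fun s => ln (u s y) - ln (u s x))).
  apply (derivable_pt_lim_minus (fun s => ln (u s y)) (fun s => ln (u s x))); auto.
Qed.

Lemma vsum_minus {V : Type} (l : list V) f g :
  vsum l (fun y => f y - g y) = vsum l f - vsum l g.
Proof. induction l; simpl; [lra|]. rewrite IHl; lra. Qed.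

Lemma F_mono (F : R -> R) a b :
  (forall x y, 0 < x -> x < y -> F x / x < F y / y) ->
  (forall r, 0 <= r -> 0 <= F r) -> 0 < a -> a < b -> F a < F b.
Proof.
  intros Hq Hn Ha Hab. specialize (Hq a b Ha Hab). specialize (Hn a ltac:(lra)).
  assert (Hfa : F a = a * (F a / a)) by (field; lra).
  assert (Hfb : F b = b * (F b / b)) by (field; lra).
  assert (0 <= F a / a) by (unfold Rdiv; apply Rmult_le_pos; [lra|left; apply Rinv_0_lt_compat; lra]).
  rewrite Hfa, Hfb. nra.
Qed.

Lemma psi_diff {V : Type} (vs : list V) w mu (v : V -> R) x :
  PsiH vs w mu Upsilon v x - PsiH vs w mu Upsilon' v x = - lap vs w mu v x.
Proof.
  unfold PsiH, lap. rewrite <- Rmult_minus_distr_l, <- vsum_minus.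
  rewrite (vsum_ext _ _ (fun y => -1 * (w x y * (v y - v x))))
    by (intro; unfold Upsilon, Upsilon'; ring).
  rewrite vsum_scal. ring.
Qed.

Lemma ln_cont_u (u : R -> R) L :
  0 < u 0 ->
  (forall eps, 0 < eps -> exists delta, 0 < delta /\
     forall h, 0 < h < delta -> Rabs ((u h - u 0) / h - L) < eps) ->
  exists eta, 0 < eta /\ forall h, 0 < h < eta -> Rabs (ln (u h) - ln (u 0)) < 1.
Proof.
  intros Hp Hr.
  assert (Hc : continuity_pt ln (u 0)).
  { apply derivable_continuous_pt. exists (/ u 0). apply derivable_pt_lim_ln; auto. }
  unfold continuity_pt, continue_in, limit1_in, limit_in in Hc. simpl in Hc.
  destruct (Hc 1 ltac:(lra)) as [al [Hal Hc']].
  destruct (Hr 1 ltac:(lra)) as [d [Hd Hr']].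
  set (K := Rabs L + 1).
  assert (HK : 0 < K) by (unfold K; pose proof (Rabs_pos L); lra).
  exists (Rmin d (al / K)). split.
  { unfold Rmin; destruct Rle_dec; [lra|]. apply Rdiv_lt_0_compat; lra. }
  intros h Hh. pose proof (Rmin_l d (al/K)). pose proof (Rmin_r d (al/K)).
  specialize (Hr' h ltac:(lra)).
  destruct (Req_dec (u h) (u 0)) as [E|E].
  { rewrite E. unfold Rminus. rewrite Rplus_opp_r, Rabs_R0. lra. }
  apply (Hc' (u h)). split; [unfold D_x, no_cond; split; auto|].
  unfold R_dist.
  assert (Hq : Rabs ((u h - u 0) / h) < K).
  { unfold K. pose proof (Rabs_triang_inv ((u h - u 0) / h) L). 
    replace ((u h - u 0) / h) with (((u h - u 0) / h - L) + L) by ring.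
    pose proof (Rabs_triang ((u h - u 0) / h - L) L). lra. }
  replace (u h - u 0) with (((u h - u 0) / h) * h) by (field; lra).
  rewrite Rabs_mult, (Rabs_right h) by lra.
  apply Rle_lt_trans with (K * h).
  - apply Rmult_le_compat_r; lra.
  - replace al with (K * (al / K)) by (field; lra). apply Rmult_lt_compat_l; lra.
Qed.

Lemma Lv_bound {V : Type} (vs : list V) w mu (a b : V -> R) x :
  (forall y, 0 <= w x y) -> 0 < mu x ->
  (forall z, Rabs (b z - a z) < 1) ->
  - lap vs w mu b x <= - lap vs w mu a x + / mu x * vsum vs (fun y => 2 * w x y).
Proof.
  intros Hw Hm Hz. unfold lap.
  assert (H : vsum vs (fun y => w x y * (a y - a x)) - vsum vs (fun y => 2 * w x y)
              <= vsum vs (fun y => w x y * (b y - b x))).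
  { rewrite <- vsum_minus. apply vsum_le. intros y.
    pose proof (Hz y) as H1; pose proof (Hz x) as H2. apply Rabs_def2 in H1, H2.
    specialize (Hw y). nra. }
  assert (0 < / mu x) by (apply Rinv_0_lt_compat; auto). nra.
Qed.

Theorem theorem1p1 (V : Type) (vs : list V) (w : V -> V -> R) (mu : V -> R)
    (F phi : R -> R) (u : R -> V -> R) :
  finite_weighted_graph vs w mu ->
  connected w ->
  CD_function F ->
  CD vs w mu F ->
  relaxation_function F phi ->
  heat_solution vs w mu u ->
  (forall t x, 0 <= t -> 0 < u t x) ->
  (forall t x, 0 < t ->
     - lap vs w mu (fun y => ln (u t y)) x <= phi t) /\
  (forall t x d, 0 < t ->
     derivable_pt_lim (fun s => ln (u s x)) t d ->
     PsiH vs w mu Upsilon (fun y => ln (u t y)) x - d <= phi t).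
Proof.
  intros [Hnd [Hall [Hsym [Hw Hmu]]]] _ [_ [Fnn [_ [Fq _]]]] HCD [Pp [Pd Pb]] [Hd0 Hr0] Hpos.
  set (Lv := fun t x => - lap vs w mu (fun y => ln (u t y)) x).
  assert (Part1 : forall t0 x0, 0 < t0 -> Lv t0 x0 <= phi t0).
  { intros t0 x0 Ht0. destruct (Rle_or_lt (Lv t0 x0) (phi t0)) as [|Hc]; auto. exfalso.
    destruct (uniform_eta vs (fun z h => Rabs (ln (u h z) - ln (u 0 z)) < 1)) as [eta [Heta Hunif]].
    { intros z. apply (ln_cont_u (fun s => u s z) (lap vs w mu (u 0) z)).
      - apply Hpos; lra.
      - apply Hr0. }
    set (B := vsum vs (fun x => Rabs (Lv 0 x) + / mu x * vsum vs (fun y => 2 * w x y))).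
    destruct (Pb B) as [dp [Hdp Hpb]].
    set (d' := Rmin eta (Rmin dp t0) / 2).
    assert (Hd'1 : 0 < d').
    { unfold d', Rmin; repeat destruct Rle_dec; lra. }
    assert (Hd'2 : d' < eta /\ d' < dp /\ d' < t0).
    { unfold d'. pose proof (Rmin_l eta (Rmin dp t0)). pose proof (Rmin_r eta (Rmin dp t0)).
      pose proof (Rmin_l dp t0). pose proof (Rmin_r dp t0). lra. }
    assert (HA : forall x, Lv d' x - phi d' < 0).
    { intros x. specialize (Hpb d' ltac:(lra)).
      assert (Hx : Lv d' x <= Lv 0 x + / mu x * vsum vs (fun y => 2 * w x y)).
      { apply Lv_bound; auto. intros z. apply Hunif; auto; lra. }
      assert (Hy : Rabs (Lv 0 x) + / mu x * vsum vs (fun y => 2 * w x y) <= B).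
      { apply (vsum_ge_term vs (fun x => Rabs (Lv 0 x) + / mu x * vsum vs (fun y => 2 * w x y))); auto.
        intros z. pose proof (Rabs_pos (Lv 0 z)).
        assert (0 <= / mu z * vsum vs (fun y => 2 * w z y)); [|lra].
        apply Rmult_le_pos; [left; apply Rinv_0_lt_compat; auto|].
        apply vsum_nonneg. intros y; specialize (Hw z y); lra. }
      pose proof (Rle_abs (Lv 0 x)). lra. }
    assert (HD : forall x c, 0 < c -> derivable_pt_lim (fun s => Lv s x - phi s) c
        (- lap vs w mu (PsiH vs w mu Upsilon' (fun y => ln (u c y))) x - - F (phi c))).
    { intros x c Hc0. apply (derivable_pt_lim_minus (fun s => Lv s x) phi); [|apply Pd; auto].
      apply Lv_deriv; auto. intros y; apply Hpos; lra. }
    destruct (list_max_ab x0 vs (fun x s => Lv s x - phi s) d' t0) as [xs [ts [Hxs [Hts Hmax]]]].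
    { lra. }
    { intros x c Hc'. apply derivable_continuous_pt. eexists. apply HD. lra. }
    assert (Hge : Lv t0 x0 - phi t0 <= Lv ts xs - phi ts) by (apply Hmax; simpl; auto; lra).
    assert (Hts' : d' < ts).
    { destruct (Req_dec ts d') as [E|E]; [|lra]. subst ts. specialize (HA xs). lra. }
    assert (Hphi : 0 < phi ts) by (apply Pp; lra).
    assert (HCDa : F (Lop vs w mu (fun y => ln (u ts y)) xs) <=
                   lap vs w mu (PsiH vs w mu Upsilon' (fun y => ln (u ts y))) xs).
    { apply HCD.
      - unfold Lop. fold (Lv ts xs). lra.
      - intros y _. unfold Lop. fold (Lv ts y). fold (Lv ts xs).
        specialize (Hmax y ts ltac:(simpl; auto) Hts). lra. }
    unfold Lop in HCDa. fold (Lv ts xs) in HCDa.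
    assert (Hl := deriv_left_max (fun s => Lv s xs - phi s) ts _ d' Hts' (HD xs ts ltac:(lra))).
    assert (Hl' : 0 <= - lap vs w mu (PsiH vs w mu Upsilon' (fun y => ln (u ts y))) xs - - F (phi ts)).
    { apply Hl. intros s Hs. apply Hmax; simpl; auto; lra. }
    assert (Hm : F (phi ts) < F (Lv ts xs)) by (apply F_mono; auto; lra).
    lra. }
  split.
  - intros t x Ht. apply (Part1 t x Ht).
  - intros t x d Ht Hd.
    assert (Hd' : d = PsiH vs w mu Upsilon' (fun y => ln (u t y)) x).
    { rewrite <- psi_eq by (intros; apply Hpos; lra).
      apply (uniqueness_limite (fun s => ln (u s x)) t); auto.
      apply (ln_u_deriv (fun s => u s x)); [apply Hpos; lra|]. apply Hd0; auto. }
    subst d. rewrite psi_diff. apply (Part1 t x Ht).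
Qed.
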